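(* Let $(W,S)$ be a Coxeter system with $S$ finite, $\phi:\operatorname{Ad}(Q_W)\to W$ the homomorphism $e_x\mapsto x$, and $C_W=\ker\phi$. Then the rank of the abelian group $C_W$ (i.e. $\dim_{\mathbb{Q}}(C_W\otimes\mathbb{Q})$) equals $c(W)$, the number of $W$-conjugacy classes of elements of $Q_W$.
   Context: A Coxeter system $(W,S)$: $S$ finite, $m:S\times S\to\mathbb{N}\cup\{\infty\}$ with $m(s,s)=1$, $2\le m(s,t)=m(t,s)\le\infty$ for $s\ne t$, $W=\langle s\in S\mid (st)^{m(s,t)}=1\ (m(s,t)<\infty)\rangle$. The Coxeter quandle is $Q_W=\bigcup_{w\in W}w^{-1}Sw$ with $x\ast y=yxy$, and $\operatorname{Ad}(Q_W)=\langle e_x\ (x\in Q_W)\mid e_y^{-1}e_xe_y=e_{x\ast y}\rangle$. $C_W$ is a central (hence abelian) subgroup of $\operatorname{Ad}(Q_W)$. *)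

(* Defs.v *)
(* Groups given by presentations are modelled as
   words in generators and their inverses, modulo the congruence generated by
   free cancellation and the relators (= quotient of the free group by the
   normal closure of the relators). *)
From mathcomp Require Import all_boot all_algebra.
Set Implicit Arguments. Unset Strict Implicit. Unset Printing Implicit Defensive.

(* a letter (x, false) is the generator x, (x, true) is its inverse x^-1 *)
Definition letter (X : Type) := (X * bool)%type.
Definition word (X : Type) := seq (letter X).

Definition winv {X : Type} (w : word X) : word X :=
  rev (map (fun l : letter X => (l.1, ~~ l.2)) w).

Inductive pres_eq {X : Type} (R : word X -> Prop) : word X -> word X -> Prop :=
| pe_refl w : pres_eq R w w
| pe_sym u v : pres_eq R u v -> pres_eq R v u
| pe_trans u v w : pres_eq R u v -> pres_eq R v w -> pres_eq R u w
| pe_cancel u v x b : pres_eq R (u ++ (x, b) :: (x, ~~ b) :: v) (u ++ v)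
| pe_rel u v r : R r -> pres_eq R (u ++ r ++ v) (u ++ v).

Definition wpow {X : Type} (w : word X) (c : int) : word X :=
  match c with
  | Posz n => flatten (nseq n w)
  | Negz n => flatten (nseq n.+1 (winv w))
  end.

(* Coxeter matrix on a finite set S; convention: m s t = 0 encodes m(s,t) = oo *)
Definition coxeter_matrix (S : finType) (m : S -> S -> nat) : Prop :=
  (forall s, m s s = 1%N) /\ (forall s t, m s t = m t s) /\
  (forall s t, s != t -> m s t != 1%N).

Definition cox_rel (S : finType) (m : S -> S -> nat) (r : word S) : Prop :=
  exists s t, (0 < m s t)%N /\
    r = flatten (nseq (m s t) [:: (s, false); (t, false)]).

Definition W_eq (S : finType) (m : S -> S -> nat) := pres_eq (cox_rel m).

Definition inQ (S : finType) (m : S -> S -> nat) (q : word S) : Prop :=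
  exists (w : word S) (s : S), W_eq m q (winv w ++ (s, false) :: w).

(* generators of Ad(Q_W): elements of Q_W (given by representing words,
   representatives of the same element of W being identified below) *)
Definition Qgen (S : finType) (m : S -> S -> nat) := {q : word S | inQ m q}.

(* relators of Ad(Q_W):
   - e_x e_y^-1 when x = y in W (generators are indexed by elements of Q_W);
   - e_y^-1 e_x e_y e_z^-1 when z = y x y = x * y in W. *)
Definition ad_rel (S : finType) (m : S -> S -> nat) (r : word (Qgen m)) : Prop :=
  (exists x y : Qgen m, W_eq m (proj1_sig x) (proj1_sig y) /\
     r = [:: (x, false); (y, true)]) \/
  (exists x y z : Qgen m, W_eq m (proj1_sig z) (proj1_sig y ++ proj1_sig x ++ proj1_sig y) /\
     r = [:: (y, true); (x, false); (y, false); (z, true)]).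

Definition Ad_eq (S : finType) (m : S -> S -> nat) := pres_eq (ad_rel (m := m)).

Definition phi (S : finType) (m : S -> S -> nat) (u : word (Qgen m)) : word S :=
  flatten (map (fun l : letter (Qgen m) =>
                  if l.2 then winv (proj1_sig l.1) else proj1_sig l.1) u).

Definition inC (S : finType) (m : S -> S -> nat) (u : word (Qgen m)) : Prop :=
  W_eq m (phi u) [::].

Definition C_indep (S : finType) (m : S -> S -> nat) (k : nat)
    (u : 'I_k -> word (Qgen m)) : Prop :=
  (forall i, inC (u i)) /\
  forall c : 'I_k -> int,
    Ad_eq (flatten [seq wpow (u i) (c i) | i <- enum 'I_k]) [::] ->
    forall i, c i = 0%R.

(* rank of C_W equals k: maximal size of a Z-independent family
   (= dim_Q (C_W (x) Q)) *)
Definition C_rank_eq (S : finType) (m : S -> S -> nat) (k : nat) : Prop :=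
  (exists u : 'I_k -> word (Qgen m), C_indep u) /\
  (forall u : 'I_k.+1 -> word (Qgen m), ~ C_indep u).

Definition W_conj (S : finType) (m : S -> S -> nat) (x y : word S) : Prop :=
  exists w : word S, W_eq m y (winv w ++ x ++ w).

Definition num_Q_classes (S : finType) (m : S -> S -> nat) (n : nat) : Prop :=
  exists q : 'I_n -> word S,
    (forall i, inQ m (q i)) /\
    (forall i j, W_conj m (q i) (q j) -> i = j) /\
    (forall x, inQ m x -> exists i, W_conj m (q i) x).

(* Main.v *)
Require Import Defs.
From mathcomp Require Import all_boot all_algebra.
From mathcomp Require Import zify.
From Stdlib Require Import Setoid Morphisms ClassicalEpsilon.
Set Implicit Arguments. Unset Strict Implicit. Unset Printing Implicit Defensive.

Section Pres.
Variable X : Type.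
Variable R : word X -> Prop.
Notation peq := (pres_eq R).

Lemma peq_refl' : Reflexive peq. Proof. exact: pe_refl. Qed.
Lemma peq_sym' : Symmetric peq. Proof. exact: pe_sym. Qed.
Lemma peq_trans' : Transitive peq. Proof. exact: pe_trans. Qed.

Lemma peq_catl a u v : peq u v -> peq (a ++ u) (a ++ v).
Proof.
elim=> [w|u1 v1 _ IH|u1 v1 w1 _ IH1 _ IH2|u1 v1 x b|u1 v1 r Hr].
- exact: pe_refl.
- exact: pe_sym.
- exact: pe_trans IH2.
- rewrite !catA; exact: pe_cancel.
- rewrite !catA -(catA (a ++ u1)); exact: pe_rel.
Qed.

Lemma peq_catr b u v : peq u v -> peq (u ++ b) (v ++ b).
Proof.
elim=> [w|u1 v1 _ IH|u1 v1 w1 _ IH1 _ IH2|u1 v1 x c|u1 v1 r Hr].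
- exact: pe_refl.
- exact: pe_sym.
- exact: pe_trans IH2.
- rewrite -!catA /=; exact: pe_cancel.
- rewrite -!catA; exact: pe_rel.
Qed.

Lemma peq_cat u u' v v' : peq u u' -> peq v v' -> peq (u ++ v) (u' ++ v').
Proof. move=> H1 H2; apply: pe_trans (peq_catr v H1) (peq_catl u' H2). Qed.

End Pres.

Add Parametric Relation (X : Type) (R : word X -> Prop) : (word X) (pres_eq R)
  reflexivity proved by (@peq_refl' X R)
  symmetry proved by (@peq_sym' X R)
  transitivity proved by (@peq_trans' X R) as peq_rel.

Add Parametric Morphism (X : Type) (R : word X -> Prop) : (@cat (letter X))
  with signature (pres_eq R) ==> (pres_eq R) ==> (pres_eq R) as cat_mor.
Proof. move=> *; exact: peq_cat. Qed.



Add Parametric Morphism (X : Type) (R : word X -> Prop) (x : letter X) : (@cons (letter X) x)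
  with signature (pres_eq R) ==> (pres_eq R) as cons_mor.
Proof. move=> u v H; exact: (peq_catl [:: x] H). Qed.

Lemma winv_cat X (u v : word X) : winv (u ++ v) = winv v ++ winv u.
Proof. by rewrite /winv map_cat rev_cat. Qed.
Lemma winv_cons X (l : letter X) (u : word X) : winv (l :: u) = winv u ++ [:: (l.1, ~~ l.2)].
Proof. by rewrite /winv /= rev_cons cats1. Qed.
Lemma winvK X (u : word X) : winv (winv u) = u.
Proof. rewrite /winv map_rev revK -map_comp; rewrite -[RHS]map_id; apply: eq_map => -[x b] /=; by rewrite negbK. Qed.
Lemma winv_nil X : winv (@nil (letter X)) = [::]. Proof. by []. Qed.

Section Pres2.
Variable X : Type.
Variable R : word X -> Prop.
Notation peq := (pres_eq R).

Lemma peq_canc1 x b : peq [:: (x, b); (x, ~~ b)] [::].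
Proof. exact: (pe_cancel R [::] [::] x b). Qed.

Lemma peq_winvr w : peq (w ++ winv w) [::].
Proof.
elim: w => [|[x b] w IH] //=; first reflexivity.
rewrite winv_cons /=.
have -> : (x, b) :: w ++ winv w ++ [:: (x, ~~ b)] = [:: (x, b)] ++ (w ++ winv w) ++ [:: (x, ~~ b)].
  by rewrite /= catA.
rewrite IH /=; exact: (pe_cancel R [::] [::] x b).
Qed.

Lemma peq_winvl w : peq (winv w ++ w) [::].
Proof. by have := peq_winvr (winv w); rewrite winvK. Qed.

Lemma peq_winv u v : peq u v -> peq (winv u) (winv v).
Proof.
move=> H.
transitivity (winv u ++ v ++ winv v); first by rewrite peq_winvr cats0; reflexivity.
transitivity (winv u ++ u ++ winv v).
  by apply: peq_catl; apply: peq_catr; apply: pe_sym.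
by rewrite catA peq_winvl; reflexivity.
Qed.

Lemma peq_nil_winv r : peq r [::] -> peq (winv r) [::].
Proof. by move/peq_winv. Qed.

Lemma peq_rel1 r : R r -> peq r [::].
Proof. move=> Hr; have := pe_rel [::] [::] Hr; by rewrite /= cats0. Qed.

Lemma peq_solve u v w : peq (u ++ winv v) w -> peq u (w ++ v).
Proof. move=> H; rewrite -H -catA peq_winvl cats0; reflexivity. Qed.

End Pres2.

Add Parametric Morphism (X : Type) (R : word X -> Prop) : (@winv X)
  with signature (pres_eq R) ==> (pres_eq R) as winv_mor.
Proof. move=> *; exact: peq_winv. Qed.

Lemma peq_invariant X (R : word X -> Prop) T (g : word X -> T) :
  (forall u v x b, g (u ++ (x, b) :: (x, ~~ b) :: v) = g (u ++ v)) ->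
  (forall u v r, R r -> g (u ++ r ++ v) = g (u ++ v)) ->
  forall u v, pres_eq R u v -> g u = g v.
Proof.
move=> Hc Hr u v; elim.
- by [].
- by move=> u1 v1 _ E; rewrite E.
- by move=> u1 v1 w1 _ E1 _ E2; rewrite E1 E2.
- by move=> *; apply: Hc.
- by move=> *; apply: Hr.
Qed.

Section Central.
Variable X : Type.
Variable R : word X -> Prop.
Notation peq := (pres_eq R).

Definition central (c : word X) := forall v, peq (v ++ c) (c ++ v).

Lemma central_letters c : (forall y, peq ((y, false) :: c) (c ++ [:: (y, false)])) -> central c.
Proof.
move=> H v; elim: v => [|[y b] v IH] /=; first by rewrite cats0; reflexivity.
have Hy : peq ((y, b) :: c) (c ++ [:: (y, b)]).
  case: b; last exact: H.
  transitivity ([:: (y, true)] ++ c ++ [:: (y, false); (y, true)]).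
    by rewrite peq_canc1 cats0; reflexivity.
  transitivity ([:: (y, true)] ++ ((y, false) :: c) ++ [:: (y, true)]).
    have -> : c ++ [:: (y, false); (y, true)] = (c ++ [:: (y, false)]) ++ [:: (y, true)] by rewrite -catA.
    by rewrite -H; reflexivity.
  exact: (pe_cancel R [::] (c ++ [:: (y, true)]) y true).
transitivity ([:: (y, b)] ++ (c ++ v)); first by rewrite -IH; reflexivity.
rewrite catA /=; by move/(peq_catr v): Hy; rewrite -catA.
Qed.

Lemma central_nil : central [::].
Proof. by move=> v; rewrite cats0; reflexivity. Qed.

Lemma central_cat c d : central c -> central d -> central (c ++ d).
Proof.
move=> Hc Hd v; rewrite catA Hc -catA Hd catA; reflexivity.
Qed.

Lemma central_winv c : central c -> central (winv c).
Proof.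
move=> Hc v.
transitivity (winv c ++ c ++ v ++ winv c); first by rewrite catA peq_winvl; reflexivity.
have E : peq (c ++ v ++ winv c) (v ++ c ++ winv c) by rewrite catA -(Hc v) -catA; reflexivity.
rewrite E peq_winvr cats0; reflexivity.
Qed.

Lemma central_peq c d : peq c d -> central c -> central d.
Proof. move=> E Hc v; rewrite -E; exact: Hc. Qed.

End Central.

Lemma peq_flatten_nseq X (R : word X -> Prop) n u v :
  pres_eq R u v -> pres_eq R (flatten (nseq n u)) (flatten (nseq n v)).
Proof. move=> E; elim: n => [|n IH] /=; [reflexivity | exact: peq_cat E IH]. Qed.

Lemma peq_wpow X (R : word X -> Prop) u v c :
  pres_eq R u v -> pres_eq R (wpow u c) (wpow v c).
Proof.
move=> E; case: c => n; [exact: peq_flatten_nseq | exact: (peq_flatten_nseq _ (peq_winv E))].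
Qed.

Lemma peq_flatten_map X (R : word X -> Prop) I (s : seq I) (g h : I -> word X) :
  (forall i, pres_eq R (g i) (h i)) -> pres_eq R (flatten (map g s)) (flatten (map h s)).
Proof. move=> E; elim: s => [|i s IH] /=; [reflexivity | exact: peq_cat (E i) IH]. Qed.

Definition cyc (S : Type) (k : nat) (s t : S) : word S :=
  flatten (nseq k [:: (s, false); (t, false)]).

Lemma cycS (S : Type) k (s t : S) : cyc k.+1 s t = cyc k s t ++ [:: (s, false); (t, false)].
Proof. rewrite /cyc; elim: k => //= k IH; by rewrite IH. Qed.

Lemma cycD (S : Type) a b (s t : S) : cyc (a + b) s t = cyc a s t ++ cyc b s t.
Proof. by rewrite /cyc nseqD flatten_cat. Qed.

Lemma cyc_shift (S : Type) k (s t : S) : cyc k s t ++ [:: (s, false)] = (s, false) :: cyc k t s.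
Proof. rewrite /cyc; elim: k => //= k IH; by rewrite IH. Qed.

Lemma cycL (S : Type) k (s t : S) :
  cyc k s t ++ (s, false) :: cyc k t s = cyc (k + k) s t ++ [:: (s, false)].
Proof. by rewrite -cyc_shift cycD catA. Qed.

Lemma rev_cyc (S : Type) k (s t : S) : rev (cyc k t s) = cyc k s t.
Proof.
elim: k => // k IH; rewrite cycS rev_cat IH.
by rewrite /cyc /=.
Qed.

Definition pos (S : Type) (w : word S) : word S := map (fun l => (l.1, false)) w.

Lemma pos_cyc (S : Type) k (s t : S) : pos (cyc k s t) = cyc k s t.
Proof. by elim: k => //= k; rewrite /cyc /= => ->. Qed.

Section Cox.
Variables (S : finType) (m : S -> S -> nat).
Hypothesis Hm : coxeter_matrix m.
Notation Weq := (pres_eq (cox_rel m)).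

Lemma cox_rel_cyc s t : 0 < m s t -> cox_rel m (cyc (m s t) s t).
Proof. by move=> H; exists s, t. Qed.

Lemma Wss s : Weq [:: (s, false); (s, false)] [::].
Proof.
apply: peq_rel1; exists s, s; case: Hm => H1 _; rewrite H1; split => //.
Qed.

Lemma Wletter s b : Weq [:: (s, b)] [:: (s, false)].
Proof.
case: b; last reflexivity.
transitivity ([:: (s, true)] ++ [:: (s, false); (s, false)]).
  by rewrite Wss; reflexivity.
exact: (pe_cancel _ [::] [:: (s, false)] s true).
Qed.

Lemma Wpos w : Weq w (pos w).
Proof.
elim: w => [|[s b] w IH] /=; first reflexivity.
exact: (peq_cat (Wletter s b) IH).
Qed.

Lemma Wwinv w : Weq (winv w) (rev (pos w)).
Proof.
have -> : rev (pos w) = pos (winv w) by rewrite /winv /pos map_rev -map_comp.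
exact: Wpos.
Qed.

Definition xend s t := if odd (m s t) then t else s.

Lemma W_dihedral s t : 0 < m s t ->
  Weq (cyc ((m s t)./2 + (m s t)./2) s t ++ [:: (s, false)]) [:: (xend s t, false)].
Proof.
move=> Hpos; rewrite /xend.
have Hrel := peq_rel1 (cox_rel_cyc Hpos).
have := odd_double_half (m s t); case: (odd (m s t)) => /= Hmst.
- transitivity (cyc ((m s t)./2 + (m s t)./2) s t ++ [:: (s, false)] ++ [:: (t, false); (t, false)]).
    by rewrite Wss cats0; reflexivity.
  have -> : cyc ((m s t)./2 + (m s t)./2) s t ++ [:: (s, false)] ++ [:: (t, false); (t, false)]
     = cyc ((m s t)./2 + (m s t)./2).+1 s t ++ [:: (t, false)] by rewrite cycS -catA.
  rewrite addnn -add1n Hmst Hrel; reflexivity.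
- rewrite add0n in Hmst; rewrite addnn Hmst Hrel; reflexivity.
Qed.

Lemma W_dihedral_conj s t : 0 < m s t ->
  Weq (winv (cyc (m s t)./2 t s) ++ (s, false) :: cyc (m s t)./2 t s) [:: (xend s t, false)].
Proof.
move=> Hpos; rewrite Wwinv pos_cyc rev_cyc cycL; exact: W_dihedral.
Qed.

Definition Wc s t := exists w, Weq [:: (t, false)] (winv w ++ (s, false) :: w).

Lemma Wc_refl s : Wc s s.
Proof. by exists [::]; reflexivity. Qed.

Lemma Wc_trans s t u : Wc s t -> Wc t u -> Wc s u.
Proof.
move=> [w Hw] [v Hv]; exists (w ++ v).
rewrite Hv -cat1s Hw winv_cat -!catA; reflexivity.
Qed.

Definition ce : rel S := fun s t => odd (m s t).

Lemma ce_sym : connect_sym ce.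
Proof.
apply: sym_connect_sym => s t; rewrite /ce; case: Hm => _ [H _]; by rewrite H.
Qed.

Lemma Wc_edge s t : ce s t -> Wc s t.
Proof.
move=> Ho; have Hpos : 0 < m s t by move: Ho; rewrite /ce; case: (m s t).
exists (cyc (m s t)./2 t s); rewrite W_dihedral_conj // /xend; move: Ho; rewrite /ce => ->; reflexivity.
Qed.

Lemma Wc_connect s t : connect ce s t -> Wc s t.
Proof.
move=> /connectP [p Hp ->]; elim: p s Hp => [|u p IH] s /=; first by move=> _; exact: Wc_refl.
move=> /andP [H1 H2]; apply: Wc_trans (Wc_edge H1) (IH _ H2).
Qed.

Definition rt s := fingraph.root ce s.

Lemma Wc_root s : Wc (rt s) s.
Proof. apply: Wc_connect; rewrite ce_sym; exact: connect_root. Qed.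

Lemma rt_edge s t : ce s t -> rt s = rt t.
Proof. move=> H; apply/(fingraph.rootP ce_sym); exact: connect1. Qed.

Definition par r (w : word S) := count (fun l : letter S => rt l.1 == r) w.

Lemma par_cat r u v : par r (u ++ v) = par r u + par r v.
Proof. exact: count_cat. Qed.

Lemma par_winv r w : par r (winv w) = par r w.
Proof. by rewrite /par /winv count_rev count_map. Qed.

Lemma par_cyc r k s t : par r (cyc k s t) = k * ((rt s == r) + (rt t == r)).
Proof. elim: k => // k IH; by rewrite cycS par_cat IH mulSnr /par /= addn0. Qed.

Lemma par_W r u v : Weq u v -> odd (par r u) = odd (par r v).
Proof.
apply: (peq_invariant (g := fun w => odd (par r w))).
- move=> u1 v1 x b; rewrite !par_cat /= /par /=.
  by case: (rt x == r) => //=; rewrite !add1n addnS addnS /= negbK.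
- move=> u1 v1 w [s [t [Hpos ->]]]; rewrite !par_cat par_cyc !oddD oddM.
  case Ho: (odd (m s t)) => /=; last by [].
  by rewrite (rt_edge Ho) addnn odd_double.
Qed.

End Cox.

Section Ad.
Variables (S : finType) (m : S -> S -> nat).
Hypothesis Hm : coxeter_matrix m.
Notation Weq := (pres_eq (cox_rel m)).
Notation Q := (Qgen m).
Notation Aeq := (pres_eq (@ad_rel S m)).

Lemma inQ_W q q' : inQ m q -> Weq q q' -> inQ m q'.
Proof. move=> [w [s H]] E; exists w, s; rewrite -E; exact: H. Qed.

Lemma inQ_conj q w : inQ m q -> inQ m (winv w ++ q ++ w).
Proof.
move=> [v [s H]]; exists (v ++ w), s; rewrite H winv_cat -!catA; reflexivity.
Qed.

Lemma inQ_gen s : inQ m [:: (s, false)].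
Proof. by exists [::], s; reflexivity. Qed.

Definition gen s : Q := exist _ [:: (s, false)] (inQ_gen s).

Lemma Q_inv (x : Q) : Weq (winv (sval x)) (sval x).
Proof.
case: x => q [w [s H]] /=; rewrite H winv_cat winv_cons winvK /= -catA /=.
apply: peq_catl; exact: (peq_catr w (Wletter Hm s true)).
Qed.

Lemma Q_sq (x : Q) : Weq (sval x ++ sval x) [::].
Proof.
transitivity (sval x ++ winv (sval x)); first by rewrite Q_inv; reflexivity.
exact: peq_winvr.
Qed.

Lemma A_same (x y : Q) b : Weq (sval x) (sval y) -> Aeq [:: (x, b)] [:: (y, b)].
Proof.
move=> E.
have H1 : Aeq [:: (x, false)] [:: (y, false)].
  have Hr : Aeq [:: (x, false); (y, true)] [::].
    by apply: peq_rel1; left; exists x, y.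
  exact: (@peq_solve _ _ [:: (x, false)] [:: (y, false)] [::] Hr).
case: b => //; exact: (peq_winv H1).
Qed.

Lemma A_conj1 (x y z : Q) : Weq (sval z) (sval y ++ sval x ++ sval y) ->
  Aeq [:: (y, true); (x, false); (y, false)] [:: (z, false)].
Proof.
move=> E.
have Hr : Aeq [:: (y, true); (x, false); (y, false); (z, true)] [::].
  by apply: peq_rel1; right; exists x, y, z.
exact: (@peq_solve _ _ [:: (y, true); (x, false); (y, false)] [:: (z, false)] [::] Hr).
Qed.

Definition mkQ q (H : inQ m q) : Q := exist _ q H.

Lemma inQ_sandwich (x y : Q) : inQ m (sval y ++ sval x ++ sval y).
Proof.
apply: (inQ_W (inQ_conj (sval y) (proj2_sig x))).
rewrite Q_inv; reflexivity.
Qed.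

Definition asq (x : Q) : word Q := [:: (x, false); (x, false)].

Lemma asq_central (x : Q) : central (@ad_rel S m) (asq x).
Proof.
apply: central_letters => y.
pose z1 := mkQ (inQ_sandwich y x).
pose z2 := mkQ (inQ_sandwich z1 x).
have E1 : Aeq [:: (x, true); (y, false); (x, false)] [:: (z1, false)] by apply: A_conj1; reflexivity.
have E2 : Aeq [:: (x, true); (z1, false); (x, false)] [:: (z2, false)] by apply: A_conj1; reflexivity.
have E3 : Aeq [:: (z2, false)] [:: (y, false)].
  apply: A_same => /=.
  rewrite !catA Q_sq /= -catA Q_sq cats0; reflexivity.
have E : Aeq [:: (x, true); (x, true); (y, false); (x, false); (x, false)] [:: (y, false)].
  rewrite -E3 -E2.
  change (Aeq ([:: (x, true)] ++ [:: (x, true); (y, false); (x, false)] ++ [:: (x, false)])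
              ([:: (x, true)] ++ [:: (z1, false)] ++ [:: (x, false)])).
  rewrite E1; reflexivity.
symmetry.
transitivity (asq x ++ [:: (x, true); (x, true); (y, false); (x, false); (x, false)]).
  by rewrite E; reflexivity.
rewrite /asq.
transitivity ([:: (x, false)] ++ [:: (x, true)] ++ [:: (y, false); (x, false); (x, false)]).
  exact: (pe_cancel _ [:: (x, false)] _ x false).
exact: (pe_cancel _ [::] _ x false).
Qed.

Definition sig (w : word S) : word Q := map (fun l => (gen l.1, false)) w.

Lemma sig_cat u v : sig (u ++ v) = sig u ++ sig v.
Proof. exact: map_cat. Qed.

Lemma A_conj w (x z : Q) : Weq (sval z) (winv w ++ sval x ++ w) ->
  Aeq (winv (sig w) ++ (x, false) :: sig w) [:: (z, false)].
Proof.
elim: w x => [|[s b] w IH] x /= E.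
  by apply: A_same; rewrite E cats0; reflexivity.
have Hy : inQ m ([:: (s, false)] ++ sval x ++ [:: (s, false)]).
  apply: (inQ_W (inQ_conj [:: (s, false)] (proj2_sig x))).
  apply: peq_catr; exact: Wletter.
pose y := mkQ Hy.
have Ey : Aeq [:: (gen s, true); (x, false); (gen s, false)] [:: (y, false)].
  by apply: A_conj1; reflexivity.
rewrite winv_cons /= -catA /=.
transitivity (winv (sig w) ++ [:: (y, false)] ++ sig w).
  apply: peq_catl; rewrite -Ey; reflexivity.
apply: IH; rewrite E winv_cons /= -!catA /=.
apply: peq_catl; apply: (peq_cat (Wletter Hm s (~~ b))); apply: peq_catl.
exact: (peq_catr w (Wletter Hm s b)).
Qed.

End Ad.

Section ModA.
Variables (S : finType) (m : S -> S -> nat).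
Hypothesis Hm : coxeter_matrix m.
Notation Weq := (pres_eq (cox_rel m)).
Notation Q := (Qgen m).
Notation Aeq := (pres_eq (@ad_rel S m)).
Notation gen := (@gen S m).
Notation sig := (@sig S m).

Definition aS s : word Q := asq (gen s).

Lemma aS_Wc s t : Wc m s t -> Aeq (aS t) (aS s).
Proof.
move=> [w Hw].
have Et := A_conj Hm (x := gen s) (z := gen t) Hw.
rewrite /aS /asq.
transitivity ([:: (gen t, false)] ++ [:: (gen t, false)]); first reflexivity.
rewrite -Et.
transitivity (winv (sig w) ++ (gen s, false) :: (sig w ++ winv (sig w)) ++ (gen s, false) :: sig w).
  by rewrite -catA /= -catA; reflexivity.
rewrite peq_winvr /=.
transitivity (winv (sig w) ++ asq (gen s) ++ sig w); first reflexivity.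
rewrite catA (asq_central Hm (gen s) (winv (sig w))) -catA peq_winvl cats0; reflexivity.
Qed.

Lemma aS_root s : Aeq (aS s) (aS (rt m s)).
Proof. apply: aS_Wc; exact: Wc_root. Qed.

Definition fa (p : letter S) : word Q := if p.2 then winv (aS p.1) else aS p.1.
Definition F (l : word S) : word Q := flatten (map fa l).

Lemma F_cat u v : F (u ++ v) = F u ++ F v.
Proof. by rewrite /F map_cat flatten_cat. Qed.

Lemma F_winv l : F (winv l) = winv (F l).
Proof.
elim: l => [|[s b] l IH] //=.
rewrite winv_cons F_cat IH /F /= winv_cat cats0.
by case: b => //=; rewrite winvK.
Qed.

Lemma fa_central p : central (@ad_rel S m) (fa p).
Proof. case: p => s [] /=; [apply: central_winv|]; exact: asq_central Hm _. Qed.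

Lemma F_central l : central (@ad_rel S m) (F l).
Proof.
elim: l => [|p l IH] /=; first exact: central_nil.
exact: central_cat (fa_central p) IH.
Qed.

End ModA.

Section ModA2.
Variables (S : finType) (m : S -> S -> nat).
Notation Q := (Qgen m).
Notation Aeq := (pres_eq (@ad_rel S m)).
Notation F := (@F S m).

Definition modA (u v : word Q) := coxeter_matrix m -> exists l, Aeq u (v ++ F l).

Lemma modA_refl u : modA u u.
Proof. by exists [::]; rewrite cats0; reflexivity. Qed.

Lemma modA_sym u v : modA u v -> modA v u.
Proof.
move=> H Hm; case: (H Hm) => l E; exists (winv l).
rewrite E F_winv -catA peq_winvr cats0; reflexivity.
Qed.

Lemma modA_trans u v w : modA u v -> modA v w -> modA u w.
Proof.
move=> H H' Hm; case: (H Hm) => l E; case: (H' Hm) => l' E'; exists (l' ++ l).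
rewrite E E' F_cat -catA; reflexivity.
Qed.

Lemma modA_cat u u' v v' : modA u u' -> modA v v' -> modA (u ++ v) (u' ++ v').
Proof.
move=> H H' Hm; case: (H Hm) => l E; case: (H' Hm) => l' E'; exists (l ++ l').
rewrite E E' F_cat -!catA; apply: peq_catl.
rewrite !catA; apply: peq_catr; rewrite -(F_central Hm l v'); reflexivity.
Qed.

Lemma modA_winv u v : modA u v -> modA (winv u) (winv v).
Proof.
move=> H Hm; case: (H Hm) => l E; exists (winv l).
rewrite E winv_cat -F_winv -(F_central Hm (winv l) (winv v)); reflexivity.
Qed.

Lemma modA_of u v : Aeq u v -> modA u v.
Proof. by move=> E _; exists [::]; rewrite cats0. Qed.

End ModA2.

Add Parametric Relation (S : finType) (m : S -> S -> nat) : (word (Qgen m)) (@modA S m)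
  reflexivity proved by (@modA_refl S m)
  symmetry proved by (@modA_sym S m)
  transitivity proved by (@modA_trans S m) as modA_rel.

Add Parametric Morphism (S : finType) (m : S -> S -> nat) : (@cat (letter (Qgen m)))
  with signature (@modA S m) ==> (@modA S m) ==> (@modA S m) as cat_modA_mor.
Proof. move=> *; exact: modA_cat. Qed.

Add Parametric Morphism (S : finType) (m : S -> S -> nat) : (@winv (Qgen m))
  with signature (@modA S m) ==> (@modA S m) as winv_modA_mor.
Proof. move=> *; exact: modA_winv. Qed.

Add Parametric Morphism (S : finType) (m : S -> S -> nat) (x : letter (Qgen m)) : (@cons (letter (Qgen m)) x)
  with signature (@modA S m) ==> (@modA S m) as cons_modA_mor.
Proof. move=> u v H; exact: (modA_cat (modA_refl [:: x]) H). Qed.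

Section Theta.
Variables (S : finType) (m : S -> S -> nat).
Hypothesis Hm : coxeter_matrix m.
Notation Weq := (pres_eq (cox_rel m)).
Notation Q := (Qgen m).
Notation Aeq := (pres_eq (@ad_rel S m)).
Notation gen := (@gen S m).
Notation sig := (@sig S m).
Notation modA := (@modA S m).
Notation F := (@F S m).

Lemma modA_letter s : modA [:: (gen s, true)] [:: (gen s, false)].
Proof.
move=> _; exists [:: (s, true)]; rewrite /F /fa /= /aS /asq /winv /=.
symmetry; exact: (pe_cancel _ [::] [:: (gen s, true)] (gen s) false).
Qed.

Lemma modA_sq s : modA [:: (gen s, false); (gen s, false)] [::].
Proof. by move=> _; exists [:: (s, false)]; reflexivity. Qed.

Lemma sig_winv w : sig (winv w) = rev (sig w).
Proof. by rewrite /sig /winv map_rev -map_comp. Qed.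

Lemma modA_rev_sig w : modA (rev (sig w)) (winv (sig w)).
Proof.
have -> : winv (sig w) = rev (map (fun l : letter S => (gen l.1, true)) w).
  by rewrite /sig /winv -map_comp.
elim: w => [|l w IH] /=; first reflexivity.
rewrite !rev_cons -!cats1 IH modA_letter; reflexivity.
Qed.

Lemma sig_relator s t : 0 < m s t -> modA (sig (cyc (m s t) s t)) [::].
Proof.
move=> Hpos.
set k := (m s t)./2.
have E1 : modA (sig (cyc (k + k) s t ++ [:: (s, false)])) [:: (gen (xend m s t), false)].
  rewrite -cycL sig_cat /= -rev_cyc /sig map_rev -/(sig (cyc k t s)) modA_rev_sig.
  apply: modA_of; apply: (A_conj Hm (x := gen s) (z := gen (xend m s t))).
  symmetry; exact: (W_dihedral_conj Hm Hpos).
have := odd_double_half (m s t); rewrite /xend in E1; case: (odd (m s t)) E1 => /= E1 Hmst.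
- rewrite -Hmst add1n -addnn cycS -[[:: (s, false); (t, false)]]/([:: (s, false)] ++ [:: (t, false)]).
  rewrite catA sig_cat E1 /= modA_sq; reflexivity.
- rewrite add0n in Hmst; rewrite -Hmst -addnn.
  transitivity (sig (cyc (k + k) s t) ++ [:: (gen s, false); (gen s, false)]).
    by rewrite modA_sq cats0; reflexivity.
  rewrite -[[:: (gen s, false); (gen s, false)]]/([:: (gen s, false)] ++ [:: (gen s, false)]).
  rewrite catA.
  have -> : sig (cyc (k + k) s t) ++ [:: (gen s, false)] = sig (cyc (k + k) s t ++ [:: (s, false)]) by rewrite sig_cat.
  rewrite E1; exact: modA_sq.
Qed.

Lemma Theta u v : Weq u v -> modA (sig u) (sig v).
Proof.
elim.
- move=> w; reflexivity.
- by move=> u1 v1 _ E; symmetry.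
- by move=> u1 v1 w1 _ E1 _ E2; transitivity (sig v1).
- move=> u1 v1 x b; rewrite !sig_cat /=.
  rewrite -[(gen x, false) :: (gen x, false) :: sig v1]/([:: (gen x, false); (gen x, false)] ++ sig v1).
  rewrite modA_sq; reflexivity.
- move=> u1 v1 r [s [t [Hpos ->]]]; rewrite !sig_cat sig_relator //; reflexivity.
Qed.

Lemma modA_gen_letter (x : Q) : modA [:: (x, false)] (sig (sval x)).
Proof.
case: (proj2_sig x) => w [s H].
rewrite (Theta H) sig_cat sig_winv /= modA_rev_sig.
symmetry; apply: modA_of; exact: (A_conj Hm (x := gen s) (z := x)).
Qed.

Lemma decomp u : modA u (sig (phi u)).
Proof.
elim: u => [|[x b] u IH] /=; first reflexivity.
have -> : phi ((x, b) :: u) = (if b then winv (sval x) else sval x) ++ phi u by [].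
rewrite sig_cat -IH -cat1s; apply: modA_cat; last reflexivity.
case: b; last exact: modA_gen_letter.
rewrite sig_winv modA_rev_sig -(modA_gen_letter x); reflexivity.
Qed.

Lemma inC_F u : inC u -> exists l, Aeq u (F l).
Proof.
move=> H; have := modA_trans (decomp u) (Theta H) Hm; case=> l E; by exists l.
Qed.

End Theta.

Import GRing.Theory Num.Theory.

Section Cancel.
Variables (S : finType) (m : S -> S -> nat).
Hypothesis Hm : coxeter_matrix m.
Notation Weq := (pres_eq (cox_rel m)).
Notation Q := (Qgen m).
Notation Aeq := (pres_eq (@ad_rel S m)).
Notation F := (@F S m).
Notation fa := (@fa S m).
Notation rt := (rt m).

Definition wt r (p : letter S) : int := if rt p.1 == r then (if p.2 then (-1)%R else 1%R) else 0%R.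
Definition cnt r (l : word S) : int := \sum_(p <- l) wt r p.

Lemma cnt_cat r u v : cnt r (u ++ v) = (cnt r u + cnt r v)%R.
Proof. by rewrite /cnt big_cat. Qed.

Lemma cnt_cons r p l : cnt r (p :: l) = (wt r p + cnt r l)%R.
Proof. by rewrite /cnt big_cons. Qed.

Lemma cnt_all r b l : all (fun q : letter S => (rt q.1 == r) ==> (q.2 == b)) l ->
  cnt r l = ((if b then (-1)%R else 1%R) * Posz (count (fun q : letter S => rt q.1 == r) l))%R.
Proof.
elim: l => [|q l IH] /=; first by rewrite /cnt big_nil mulr0.
move=> /andP [Hq Hl]; rewrite cnt_cons IH // /wt.
case E: (rt q.1 == r) in Hq *; last by rewrite /= add0r add0n.
move: Hq => /= /eqP ->; rewrite add1n -addn1 PoszD mulrDr mulr1 addrC; done.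
Qed.

Lemma fa_pair s s' b : rt s = rt s' -> Aeq (fa (s, b) ++ fa (s', ~~ b)) [::].
Proof.
move=> E.
have Ea : Aeq (aS m s') (aS m s) by rewrite (aS_root Hm s') (aS_root Hm s) E; reflexivity.
case: b.
  change (Aeq (winv (aS m s) ++ aS m s') [::]); rewrite Ea; exact: peq_winvl.
change (Aeq (aS m s ++ winv (aS m s')) [::]); rewrite Ea; exact: peq_winvr.
Qed.

Lemma F_cancel n l : (size l <= n)%N -> (forall r, cnt r l = 0%R) -> Aeq (F l) [::].
Proof.
elim: n l => [|n IH] [|p l] //= Hs Hc; try reflexivity.
move: Hs Hc; case: p => s b Hs Hc.
have Hex : has (fun q : letter S => (rt q.1 == rt s) && (q.2 == ~~ b)) l.
  apply/negPn/negP => Hn.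
  have Hall : all (fun q : letter S => (rt q.1 == rt s) ==> (q.2 == b)) l.
    apply/allP => q Hq; apply/implyP => Hr.
    move/hasPn: Hn => /(_ q Hq); rewrite Hr /=.
    by case: (q.2); case: (b).
  have := Hc (rt s); rewrite cnt_cons (cnt_all Hall) /wt eqxx /=.
  clear Hc; case: (b); lia.
case/hasP: Hex => p' Hin /andP [Hr Hb].
case/splitPr: Hin Hs Hc => l1 l2 Hs Hc.
have -> : F ((s, b) :: l1 ++ p' :: l2) = fa (s, b) ++ F l1 ++ fa p' ++ F l2.
  by rewrite /F /= map_cat flatten_cat.
transitivity (fa (s, b) ++ (fa p' ++ F l1) ++ F l2).
  by rewrite -(fa_central Hm p' (F l1)) -!catA; reflexivity.
move: Hr Hb Hc Hs; case: p' => s' b' /= /eqP Hr /eqP -> Hc Hs.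
rewrite !catA fa_pair // /=.
rewrite -F_cat; apply: IH.
  by move: Hs; rewrite !size_cat /=; lia.
move=> r; have := Hc r; rewrite !cnt_cons !cnt_cat !cnt_cons /wt /= Hr.
clear Hc Hs; case: (rt s == r); case: (b) => /=; lia.
Qed.

End Cancel.

Import GRing.Theory Num.Theory.

Section Additive.
Variable X : Type.
Variable g : letter X -> int.
Hypothesis g_inv : forall x b, g (x, ~~ b) = (- g (x, b))%R.
Definition gsum (w : word X) : int := \sum_(p <- w) g p.

Lemma gsum_cat u v : gsum (u ++ v) = (gsum u + gsum v)%R.
Proof. by rewrite /gsum big_cat. Qed.

Lemma gsum_winv u : gsum (winv u) = (- gsum u)%R.
Proof.
elim: u => [|[x b] u IH]; first by rewrite /gsum big_nil oppr0.
rewrite winv_cons gsum_cat IH /gsum /= !big_cons big_nil g_inv addr0 opprD addrC //.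
Qed.

Lemma gsum_nseq n u : gsum (flatten (nseq n u)) = (n%:Z * gsum u)%R.
Proof.
elim: n => [|n IH]; first by rewrite /gsum big_nil mul0r.
by rewrite /= gsum_cat IH -addn1 PoszD mulrDl mul1r addrC.
Qed.

Lemma gsum_wpow u c : gsum (wpow u c) = (c * gsum u)%R.
Proof.
case: c => n; first exact: gsum_nseq.
by rewrite /wpow gsum_nseq gsum_winv NegzE mulrN mulNr.
Qed.

Lemma gsum_flatten I (s : seq I) (h : I -> word X) :
  gsum (flatten (map h s)) = (\sum_(i <- s) gsum (h i))%R.
Proof.
elim: s => [|i s IH] /=; first by rewrite /gsum !big_nil.
by rewrite gsum_cat IH big_cons.
Qed.
End Additive.

Section Psi.
Variables (S : finType) (m : S -> S -> nat).
Hypothesis Hm : coxeter_matrix m.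
Notation Weq := (pres_eq (cox_rel m)).
Notation Q := (Qgen m).
Notation Aeq := (pres_eq (@ad_rel S m)).
Notation F := (@F S m).
Notation rt := (rt m).

Definition gpsi r (p : letter Q) : int :=
  if odd (par m r (sval p.1)) then (if p.2 then (-1)%R else 1%R) else 0%R.

Lemma gpsi_inv r x b : gpsi r (x, ~~ b) = (- gpsi r (x, b))%R.
Proof. rewrite /gpsi /=; case: (odd _) => //; case: b => //=; by rewrite opprK. Qed.

Lemma gwt_inv r x b : wt m r (x, ~~ b) = (- wt m r (x, b))%R.
Proof. rewrite /wt /=; case: (_ == _) => //; case: b => //=; by rewrite opprK. Qed.

Lemma psi_Aeq r u v : Aeq u v -> gsum (gpsi r) u = gsum (gpsi r) v.
Proof.
apply: (peq_invariant (g := gsum (gpsi r))).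
- move=> u1 v1 x b; rewrite !gsum_cat /gsum !big_cons gpsi_inv; congr (_ + _)%R.
  by rewrite addrA addrN add0r.
- move=> u1 v1 w Hr; rewrite !gsum_cat; congr (_ + _)%R.
  suff -> : gsum (gpsi r) w = 0%R by rewrite add0r.
  case: Hr => [[x [y [E ->]]] | [x [y [z [E ->]]]]].
  + rewrite /gsum !big_cons big_nil /gpsi /= (par_W Hm r E).
    by case: (odd _); rewrite ?addr0 ?subrr.
  + rewrite /gsum !big_cons big_nil /gpsi /= (par_W Hm r E) !par_cat !oddD.
    case: (odd (par m r (sval y))); case: (odd (par m r (sval x))) => /=; lia.
Qed.

Lemma F_cat' u v : F (u ++ v) = F u ++ F v. Proof. exact: F_cat. Qed.

Lemma F_nseq n l : F (flatten (nseq n l)) = flatten (nseq n (F l)).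
Proof. elim: n => //= n IH; by rewrite F_cat IH. Qed.

Lemma F_wpow l c : F (wpow l c) = wpow (F l) c.
Proof. case: c => n; first exact: F_nseq. by rewrite /wpow F_nseq F_winv. Qed.

Lemma F_flatten I (s : seq I) (h : I -> word S) :
  F (flatten (map h s)) = flatten (map (fun i => F (h i)) s).
Proof. elim: s => //= i s IH; by rewrite F_cat IH. Qed.

End Psi.

Section LinAlg.
Local Open Scope ring_scope.

Lemma int_kernel n (M : 'M[int]_(n.+1, n)) :
  exists c : 'rV[int]_(n.+1), c != 0 /\ c *m M = 0.
Proof.
pose M' := map_mx (intr : int -> rat) M.
pose K := kermx M'.
have rK : (\rank K = n.+1 - \rank M')%N by exact: mxrank_ker.
have Kn0 : K != 0.
  apply/eqP => K0; move: rK; rewrite K0 mxrank0.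
  have := rank_leq_col M'; lia.
have [i vn0] : exists i, row i K != 0.
  apply/existsP; move: Kn0; apply: contraR; rewrite negb_exists => /forallP H.
  by apply/eqP/row_matrixP => j; rewrite row0; apply/eqP; move: (H j); rewrite negbK.
pose v := row i K.
have vM : v *m M' = 0 by rewrite /v -row_mul mulmx_ker row0.
have {vn0} vn0 : v != 0 by [].
clearbody v.
pose D := \prod_(k < n.+1) denq (v 0 k).
pose c : 'rV[int]_(n.+1) := \row_j (numq (v 0 j) * \prod_(k < n.+1 | k != j) denq (v 0 k)).
have cE : map_mx intr c = (D%:~R : rat) *: v.
  by apply/rowP => j; rewrite [LHS]mxE [in LHS]mxE [RHS]mxE; rewrite (@intrM rat) numqE /D [in RHS](bigD1 j) //= (@intrM rat) -mulrA mulrC.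
have D0 : (D%:~R : rat) != 0.
  rewrite intr_eq0 /D; apply/prodf_neq0 => k _; exact: denq_neq0.
exists c; split.
  apply: contraNneq vn0 => c0.
  have : (D%:~R : rat) *: v = 0 by rewrite -cE c0 map_mx0.
  by move/eqP; rewrite scaler_eq0 (negbTE D0) /= => /eqP ->.
have H0 : map_mx (intr : int -> rat) (c *m M) = 0.
  by rewrite map_mxM cE -scalemxAl vM scaler0.
apply/matrixP => a b; move/matrixP: H0 => /(_ a b); rewrite !mxE.
by move/eqP; rewrite intr_eq0 => /eqP.
Qed.
End LinAlg.

Import GRing.Theory Num.Theory.

Theorem proposition3p2 (S : finType) (m : S -> S -> nat) :
  coxeter_matrix m ->
  exists n : nat, num_Q_classes m n /\ C_rank_eq m n.
Proof.
move=> Hm.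
pose Rs := [set r : S | rt m r == r].
exists #|Rs|.
pose rep (i : 'I_#|Rs|) : S := enum_val i.
have Hrep i : rt m (rep i) = rep i.
  by have := enum_valP i; rewrite inE => /eqP.
have Hrep_inj : injective rep by exact: enum_val_inj.
have Hsurj s : exists i, rep i = rt m s.
  have Hin : rt m s \in Rs by rewrite inE; apply/eqP; exact: (fingraph.root_root (ce_sym Hm)).
  by exists (enum_rank_in Hin (rt m s)); rewrite /rep enum_rankK_in.
split.
- exists (fun i => [:: (rep i, false)]); split; [|split].
  + move=> i; exact: inQ_gen.
  + move=> i j [w E].
    have := par_W Hm (rep j) E.
    rewrite !par_cat par_winv /par /= Hrep eqxx /= addn0 !oddD Hrep.
    by case: (odd (count _ w)); case: (eqVneq (rep i) (rep j)) => [/Hrep_inj -> | ] //=.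

  + move=> x [w [s H]].
    have [v Hv] := Wc_root Hm s.
    have [i Hi] := Hsurj s.
    exists i, (v ++ w).
    rewrite H Hi winv_cat -cat1s Hv -!catA; reflexivity.
- split.
  + exists (fun i => asq (gen m (rep i))); split.
      move=> i; rewrite /inC /phi /=; exact: Wss.
    move=> c H i.
    have := psi_Aeq Hm (rep i) H.
    rewrite gsum_flatten.
    have E j : gsum (gpsi (rep i)) (wpow (asq (gen m (rep j))) (c j)) =
               (c j * (if j == i then 2 else 0))%R.
      rewrite (gsum_wpow (@gpsi_inv S m (rep i))).
      apply: congr1; rewrite /gsum !big_cons big_nil /gpsi /par /= Hrep.
      case: (eqVneq j i) => [-> | Hne]; first by rewrite eqxx.
      by rewrite (negbTE (contra_neq (@Hrep_inj j i) Hne)).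
    rewrite (eq_bigr _ (fun j _ => E j)) big_enum /= (bigD1 i) //= eqxx big1.
      by rewrite /gsum big_nil addr0; lia.
    by move=> j /negbTE ->; rewrite mulr0.
  + move=> u [HC Hind].
    pose l i := proj1_sig (constructive_indefinite_description _ (inC_F Hm (HC i))).
    have Hl i : pres_eq (@ad_rel S m) (u i) (F m (l i)).
      exact: (proj2_sig (constructive_indefinite_description _ (inC_F Hm (HC i)))).
    pose M : 'M[int]_(#|Rs|.+1, #|Rs|) := (\matrix_(i, j) cnt m (rep j) (l i))%R.
    have [c [cn0 cM]] := int_kernel M.
    have Hc : forall i, c ord0 i = 0%R.
      apply: (Hind (fun i => c ord0 i)).
      transitivity (flatten [seq wpow (F m (l i)) (c ord0 i) | i <- enum 'I_#|Rs|.+1]).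
        apply: peq_flatten_map => i; apply: peq_wpow; exact: Hl i.
      have -> : flatten [seq wpow (F m (l i)) (c ord0 i) | i <- enum 'I_#|Rs|.+1] =
                F m (flatten [seq wpow (l i) (c ord0 i) | i <- enum 'I_#|Rs|.+1]).
        by rewrite F_flatten; congr flatten; apply: eq_map => i; rewrite F_wpow.
      apply: (F_cancel Hm (leqnn _)) => r.
      change (gsum (wt m r) (flatten [seq wpow (l i) (c ord0 i) | i <- enum 'I_#|Rs|.+1]) = 0%R).
      rewrite gsum_flatten.
      under eq_bigr => i _ do rewrite (gsum_wpow (@gwt_inv S m r)).
      case: (boolP (r \in Rs)) => Hr.
        have Hr' : rt m r = r by move: Hr; rewrite inE => /eqP.
        have [j Hj] := Hsurj r; rewrite Hr' in Hj.
        have := congr1 (fun A : 'M[int]_(1, #|Rs|) => A ord0 j) cM; rewrite !mxE => E.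
        rewrite -[in RHS]E big_enum /=.
        by apply: eq_big => // i _; rewrite !mxE Hj.
      rewrite big1 // => i _.
      suff -> : gsum (wt m r) (l i) = 0%R by rewrite mulr0.
      rewrite /gsum big1 // => p _; rewrite /wt.
      case: eqP => // E; exfalso; move/negP: Hr; apply.
      by rewrite inE -E; apply/eqP; exact: (fingraph.root_root (ce_sym Hm)).
    apply/negP: cn0; apply/negPn/eqP/rowP => j; by rewrite Hc mxE.
Qed.
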